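(* Let $\boldsymbol\Delta=(\Delta_1,\dots,\Delta_9)$ be a probability vector, let $p_1,p_2,\dots\in[0,1]$, and let $X_1,X_2,\dots$ be independent random joint genotypes with $X_i$ taking values $x\in\{0000,1111,1101,0111,0101,1100,0011,0100,0001\}$ with probabilities $f^{(i)}_x$ given, with $p=p_i$, $q=1-p_i$, by \begin{align*} f_{0000} &= q\Delta_1 + q^2(\Delta_2+\Delta_3+\Delta_5+\Delta_7)+q^3(\Delta_4+\Delta_6+\Delta_8)+q^4\Delta_9,\\ f_{1111} &= p\Delta_1 + p^2(\Delta_2+\Delta_3+\Delta_5+\Delta_7)+p^3(\Delta_4+\Delta_6+\Delta_8)+p^4\Delta_9,\\ f_{1101} &= pq\bigl(\Delta_3 + p(\Delta_8+2\Delta_4+2p\Delta_9)\bigr),\quad f_{0111} = pq\bigl(\Delta_5 + p(\Delta_8+2\Delta_6+2p\Delta_9)\bigr),\\ f_{0101} &= pq\bigl(2\Delta_7+q\Delta_8+4pq\Delta_9\bigr),\\ f_{1100} &= pq\bigl(\Delta_2+q\Delta_4+p\Delta_6+pq\Delta_9\bigr),\quad f_{0011} = pq\bigl(\Delta_2+q\Delta_6+p\Delta_4+pq\Delta_9\bigr),\\ f_{0100} &= pq\bigl(\Delta_5+q\Delta_8+2q\Delta_6+2q^2\Delta_9\bigr),\quad f_{0001} = pq\bigl(\Delta_3+q\Delta_8+2q\Delta_4+2q^2\Delta_9\bigr). \end{align*} For each $n$ let $\hat f_x=\frac1n\sum_{i=1}^n\mathbf 1\{X_i=x\}$ and define \begin{align*}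 \hat\tau_{1\mathrm A}&=\tfrac12(\hat f_{1101}+\hat f_{0100})+\tfrac14\hat f_{0101}+\hat f_{1100}, & \hat\tau_{1\mathrm B}&=\tfrac12(\hat f_{0111}+\hat f_{0001})+\tfrac14\hat f_{0101}+\hat f_{0011},\\ \hat\tau_1&=\tfrac12(\hat\tau_{1\mathrm A}+\hat\tau_{1\mathrm B}),\\ \hat\tau_{2\mathrm A}&=\tfrac12(\hat f_{0111}+\hat f_{0101}+\hat f_{0100}), & \hat\tau_{2\mathrm B}&=\tfrac12(\hat f_{1101}+\hat f_{0101}+\hat f_{0001}),\\ \hat\tau_3&=\tfrac14\bigl((\hat f_{0100}-\hat f_{0111})+(\hat f_{0001}-\hat f_{1101})\bigr), & \hat\tau_4&=\tfrac12(\hat f_{1100}-\hat f_{0011}), \end{align*} $\bar\nu_2=\frac1n\sum_{i=1}^n p_i(1-p_i)$, $\bar\nu_3=\frac1n\sum_{i=1}^n p_i(1-p_i)(1-2p_i)$, and the estimators \[ \hat\theta_1=1-\frac{\hat\tau_1}{\bar\nu_2},\quad \hat\theta_{2\mathrm A}=1-\frac{\hat\tau_{2\mathrm A}}{\bar\nu_2},\quad \hat\theta_{2\mathrm B}=1-\frac{\hat\tau_{2\mathrm B}}{\bar\nu_2},\quad \hat\theta_3=1-\frac{\hat\tau_3}{\bar\nu_3},\quad \hat\theta_4=\frac{\hat\tau_4}{\bar\nu_3}. \] Suppose there exist constants $\nu_2,\nu_3$ with $\nu_2\neq0$ and $\nu_3\neq0$ such that $\bar\nu_2\to\nu_2$ and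 $\bar\nu_3\to\nu_3$ in probability as $n\to\infty$. Then $\hat\theta_y\to\theta_y$ in probability as $n\to\infty$ for each $y\in\{1,2\mathrm A,2\mathrm B,3,4\}$, where \begin{align*} \theta_1&=\Delta_1+\tfrac12(\Delta_3+\Delta_5+\Delta_7)+\tfrac14\Delta_8,\quad \theta_{2\mathrm A}=\Delta_1+\Delta_2+\Delta_3+\Delta_4,\quad \theta_{2\mathrm B}=\Delta_1+\Delta_2+\Delta_5+\Delta_6,\\ \theta_3&=\Delta_1+\Delta_2+\Delta_3+\Delta_5+\Delta_7+\tfrac12(\Delta_4+\Delta_6+\Delta_8),\quad \theta_4=\tfrac12(\Delta_4-\Delta_6). \end{align*}
   Context: $\boldsymbol\Delta$ is the vector of Jacquard's identity coefficients (probabilities of the nine identity-by-descent modes) for a pair of diploid individuals A, B, common to all loci; $p_i$ is the frequency of allele 1 at the $i$-th independent biallelic locus. The genotype label $abcd$ means A has unordered genotype $a/b$ and B has unordered genotype $c/d$ (e.g. $1101$: A is $1/1$, B is $0/1$). *)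

(* Defs.v *)
From HB Require Import structures.
From mathcomp Require Import all_boot all_order all_algebra.
From mathcomp Require Import all_classical all_reals all_analysis.
Set Implicit Arguments. Unset Strict Implicit. Unset Printing Implicit Defensive.
Import Order.TTheory GRing.Theory Num.Theory.
Import numFieldNormedType.Exports.
Local Open Scope classical_set_scope.
Local Open Scope ring_scope.

(* The nine joint genotypes abcd: A has genotype a/b, B has genotype c/d. *)
Inductive genotype : Type :=
  G0000 | G1111 | G1101 | G0111 | G0101 | G1100 | G0011 | G0100 | G0001.

Section Defs.
Variable R : realType.

(* Delta is indexed 1..9 : Delta k = Δ_k. *)
Definition prob_vector9 (Delta : nat -> R) : Prop :=
  (forall k, (1 <= k <= 9)%N -> 0 <= Delta k) /\
  \sum_(1 <= k < 10) Delta k = 1.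

Definition freq (Delta : nat -> R) (p : R) (x : genotype) : R :=
  let q := 1 - p in
  let D := Delta in
  match x with
  | G0000 => q * D 1%N + q ^+ 2 * (D 2%N + D 3%N + D 5%N + D 7%N)
             + q ^+ 3 * (D 4%N + D 6%N + D 8%N) + q ^+ 4 * D 9%N
  | G1111 => p * D 1%N + p ^+ 2 * (D 2%N + D 3%N + D 5%N + D 7%N)
             + p ^+ 3 * (D 4%N + D 6%N + D 8%N) + p ^+ 4 * D 9%N
  | G1101 => p * q * (D 3%N + p * (D 8%N + 2 * D 4%N + 2 * p * D 9%N))
  | G0111 => p * q * (D 5%N + p * (D 8%N + 2 * D 6%N + 2 * p * D 9%N))
  | G0101 => p * q * (2 * D 7%N + q * D 8%N + 4 * p * q * D 9%N)
  | G1100 => p * q * (D 2%N + q * D 4%N + p * D 6%N + p * q * D 9%N)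
  | G0011 => p * q * (D 2%N + q * D 6%N + p * D 4%N + p * q * D 9%N)
  | G0100 => p * q * (D 5%N + q * D 8%N + 2 * q * D 6%N + 2 * q ^+ 2 * D 9%N)
  | G0001 => p * q * (D 3%N + q * D 8%N + 2 * q * D 4%N + 2 * q ^+ 2 * D 9%N)
  end.

Definition theta1 (D : nat -> R) : R :=
  D 1%N + 2^-1 * (D 3%N + D 5%N + D 7%N) + 4^-1 * D 8%N.
Definition theta2A (D : nat -> R) : R := D 1%N + D 2%N + D 3%N + D 4%N.
Definition theta2B (D : nat -> R) : R := D 1%N + D 2%N + D 5%N + D 6%N.
Definition theta3 (D : nat -> R) : R :=
  D 1%N + D 2%N + D 3%N + D 5%N + D 7%N + 2^-1 * (D 4%N + D 6%N + D 8%N).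
Definition theta4 (D : nat -> R) : R := 2^-1 * (D 4%N - D 6%N).

Definition nubar2 (p : nat -> R) (n : nat) : R :=
  n%:R^-1 * \sum_(i < n) p i * (1 - p i).
Definition nubar3 (p : nat -> R) (n : nat) : R :=
  n%:R^-1 * \sum_(i < n) p i * (1 - p i) * (1 - 2 * p i).

Variables (T : Type).
Implicit Types (X : nat -> T -> genotype).

(* empirical frequency \hat f_x based on X_0, ..., X_{n-1} *)
Definition fhat X (n : nat) (x : genotype) (w : T) : R :=
  n%:R^-1 * \sum_(i < n) (\1_(X i @^-1` [set x]) w : R).

Definition tau1A X n w := 2^-1 * (fhat X n G1101 w + fhat X n G0100 w)
  + 4^-1 * fhat X n G0101 w + fhat X n G1100 w.
Definition tau1B X n w := 2^-1 * (fhat X n G0111 w + fhat X n G0001 w)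
  + 4^-1 * fhat X n G0101 w + fhat X n G0011 w.
Definition tau1 X n w := 2^-1 * (tau1A X n w + tau1B X n w).
Definition tau2A X n w :=
  2^-1 * (fhat X n G0111 w + fhat X n G0101 w + fhat X n G0100 w).
Definition tau2B X n w :=
  2^-1 * (fhat X n G1101 w + fhat X n G0101 w + fhat X n G0001 w).
Definition tau3 X n w := 4^-1 * ((fhat X n G0100 w - fhat X n G0111 w)
  + (fhat X n G0001 w - fhat X n G1101 w)).
Definition tau4 X n w := 2^-1 * (fhat X n G1100 w - fhat X n G0011 w).

Definition theta1hat (p : nat -> R) X n w := 1 - tau1 X n w / nubar2 p n.
Definition theta2Ahat (p : nat -> R) X n w := 1 - tau2A X n w / nubar2 p n.
Definition theta2Bhat (p : nat -> R) X n w := 1 - tau2B X n w / nubar2 p n.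
Definition theta3hat (p : nat -> R) X n w := 1 - tau3 X n w / nubar3 p n.
Definition theta4hat (p : nat -> R) X n w := tau4 X n w / nubar3 p n.
End Defs.

Section Prob.
Context {d : measure_display} {T : measurableType d} {R : realType}.
Variable P : probability T R.

Definition discrete_RVs (X : nat -> T -> genotype) : Prop :=
  forall i x, measurable (X i @^-1` [set x]).

Definition mutually_independent (X : nat -> T -> genotype) : Prop :=
  forall (I : seq nat) (x : nat -> genotype), uniq I ->
    P [set w | forall i, i \in I -> X i w = x i] =
    (\prod_(i <- I) P (X i @^-1` [set x i]))%E.

Definition cvg_in_prob (Y : nat -> T -> R) (c : R) : Prop :=
  forall eps : R, 0 < eps ->
    P [set w | eps <= `|Y n w - c|] @[n --> \oo] --> 0%E.
End Prob.

(* Main.v *)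
Require Import Defs.
From HB Require Import structures.
From mathcomp Require Import all_boot all_order all_algebra.
From mathcomp Require Import all_classical all_reals all_analysis.
From mathcomp Require Import ring lra.
Import Order.TTheory GRing.Theory Num.Theory.
Import numFieldNormedType.Exports.
Local Open Scope classical_set_scope.
Local Open Scope ring_scope.
Set Implicit Arguments. Unset Strict Implicit. Unset Printing Implicit Defensive.

Definition g2n (x : genotype) : nat :=
  match x with G0000 => 0 | G1111 => 1 | G1101 => 2 | G0111 => 3 | G0101 => 4
  | G1100 => 5 | G0011 => 6 | G0100 => 7 | G0001 => 8 end%N.
Definition n2g (n : nat) : option genotype :=
  match n with 0 => Some G0000 | 1 => Some G1111 | 2 => Some G1101 | 3 => Some G0111
  | 4 => Some G0101 | 5 => Some G1100 | 6 => Some G0011 | 7 => Some G0100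
  | 8 => Some G0001 | _ => None end%N.
Lemma g2nK : pcancel g2n n2g. Proof. by case. Qed.
HB.instance Definition _ := Countable.copy genotype (pcan_type g2nK).
Definition genum := [:: G0000; G1111; G1101; G0111; G0101; G1100; G0011; G0100; G0001].
Lemma genumP : fintype.finite_axiom genum. Proof. by case. Qed.
HB.instance Definition _ := fintype.isFinite.Build genotype (@genumP).

Lemma sum_gen (R : nmodType) (F : genotype -> R) :
  \sum_x F x = F G0000 + F G1111 + F G1101 + F G0111 + F G0101 + F G1100
     + F G0011 + F G0100 + F G0001.
Proof.
by rewrite /index_enum !unlock /= !addrA addr0. Qed.

Lemma cvgr_harmonic_helper (R : realType) (c : R) :
  ((c * harmonic n)%:E) @[n --> \oo] --> 0%E.
Proof.
apply: cvg_EFin; first by near=> n.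
rewrite -(mulr0 c); exact: (cvgMr (a := c) (@cvg_harmonic R)).
Unshelve. all: by end_near.
Qed.

Section Prob.
Variables (d : measure_display) (T : measurableType d) (R : realType).
Variable P : probability T R.
Variables (Delta : nat -> R) (p : nat -> R) (X : nat -> T -> genotype).
Hypothesis HX : discrete_RVs X.
Hypothesis Hind : mutually_independent P X.
Hypothesis Hf : forall i x, P (X i @^-1` [set x]) = (freq Delta (p i) x)%:E.

Definition tup n (w : T) : {ffun 'I_n -> genotype} := [ffun i : 'I_n => X i w].
Definition fr i x := freq Delta (p i) x.
Definition pi n (t : {ffun 'I_n -> genotype}) := \prod_(i < n) fr i (t i).
Definition xt n (t : {ffun 'I_n -> genotype}) (i : nat) : genotype :=
  match @insub _ (fun k => k < n)%N 'I_n i with Some j => t j | None => G0000 end.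
Definition cyl n t := [set w | forall i, i \in iota 0 n -> X i w = @xt n t i].
Arguments cyl : clear implicits.

Lemma xtE n t (i : 'I_n) : @xt n t i = t i.
Proof. by rewrite /xt valK. Qed.

Lemma fr_ge0 i x : 0 <= fr i x.
Proof. by rewrite -lee_fin -Hf measure_ge0. Qed.

Lemma cylP n t w : cyl n t w <-> tup n w = t.
Proof.
split => [H|<-].
  by apply/ffunP => i; rewrite ffunE H ?mem_iota ?add0n ?ltn_ord // xtE.
move=> i; rewrite mem_iota add0n /= => Hi.
by rewrite (_ : i = Ordinal Hi) // xtE ffunE.
Qed.

Lemma meas_first (x : nat -> genotype) n :
  measurable [set w | forall i, (i < n)%N -> X i w = x i].
Proof.
elim: n => [|n IH].
  by rewrite (_ : [set w | _] = setT); [exact: measurableT | apply/seteqP; split].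
rewrite (_ : [set w | _] = [set w | forall i, (i < n)%N -> X i w = x i] `&` X n @^-1` [set x n]).
  exact: measurableI.
apply/seteqP; split => w /=.
  by move=> H; split; [move=> i Hi; apply: H; apply: ltnW | apply: H].
by move=> [H1 H2] i; rewrite ltnS leq_eqVlt => /orP [/eqP -> //|]; apply: H1.
Qed.

Lemma meas_cyl n t : measurable (cyl n t).
Proof.
rewrite (_ : cyl n t = [set w | forall i, (i < n)%N -> X i w = @xt n t i]).
  exact: meas_first.
by apply/seteqP; split => w /= H i Hi; apply: H; rewrite ?mem_iota in Hi *.
Qed.

Lemma P_cyl n t : P (cyl n t) = (pi t)%:E.
Proof.
rewrite /cyl Hind ?iota_uniq //.
rewrite (eq_bigr (fun i => (fr i (xt t i))%:E)); last by move=> i _; rewrite Hf.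
rewrite prodEFin /pi; congr (_%:E).
rewrite (eq_bigr (fun i : 'I_n => fr i (xt t i))); last by move=> i _; rewrite xtE.
by rewrite -(big_mkord xpredT (fun i => fr i (xt t i))) /index_iota subn0.
Qed.

Lemma P_seq n (s : seq {ffun 'I_n -> genotype}) : uniq s ->
  measurable [set w | tup n w \in s] /\
  P [set w | tup n w \in s] = (\sum_(t <- s) pi t)%:E.
Proof.
elim: s => [|t s IH] /=.
  rewrite big_nil (_ : [set w | _] = set0); last by apply/seteqP; split.
  by rewrite measure0.
move=> /andP [tns /IH [ms Ps]].
have -> : [set w | tup n w \in t :: s] = cyl n t `|` [set w | tup n w \in s].
  apply/seteqP; split => w /=; rewrite in_cons.
    by case/orP => [/eqP H|H]; [left; apply/cylP | right].
  by case => [/cylP ->|->]; rewrite ?eqxx ?orbT.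
split; first exact: measurableU (meas_cyl _) ms.
rewrite measureU //; first by rewrite big_cons EFinD -P_cyl; congr (_ + _); exact: Ps.
  exact: meas_cyl.
apply/seteqP; split => w //= [/cylP H1 H2]; by move: tns; rewrite -H1 H2.
Qed.

Lemma P_pred n (Q : pred {ffun 'I_n -> genotype}) :
  P [set w | Q (tup n w)] = (\sum_(t | Q t) pi t)%:E.
Proof.
have [_ H] := P_seq (enum_uniq Q).
rewrite -big_enum -H; congr (P _); apply/seteqP; split => w /=; by rewrite mem_enum.
Qed.

Lemma sum_pi n : \sum_(t : {ffun 'I_n -> genotype}) pi t = 1.
Proof.
apply: EFin_inj; rewrite -(probability_setT P) -(P_pred xpredT).
by congr (P _); apply/seteqP; split.
Qed.

Lemma P_seq1 i (s : seq genotype) : uniq s ->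
  measurable [set w | X i w \in s] /\
  P [set w | X i w \in s] = (\sum_(x <- s) fr i x)%:E.
Proof.
elim: s => [|x s IH] /=.
  rewrite big_nil (_ : [set w | _] = set0); last by apply/seteqP; split.
  by rewrite measure0.
move=> /andP [tns /IH [ms Ps]].
have -> : [set w | X i w \in x :: s] = X i @^-1` [set x] `|` [set w | X i w \in s].
  apply/seteqP; split => w /=; rewrite in_cons.
    by case/orP => [/eqP H|H]; [left | right].
  by case => [->|->]; rewrite ?eqxx ?orbT.
split; first exact: measurableU (HX _ _) ms.
rewrite measureU //; first by rewrite big_cons EFinD -Hf; congr (_ + _); exact: Ps.
apply/seteqP; split => w //= [H1 H2]; by move: tns; rewrite -H1 H2.
Qed.

Lemma sum_fr i : \sum_x fr i x = 1.
Proof.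
have [_ H] := P_seq1 i (enum_uniq (@predT genotype)).
apply: EFin_inj; rewrite -(probability_setT P).
rewrite -big_enum -H; congr (P _); apply/seteqP; split => w //= _.
by rewrite mem_enum.
Qed.

Lemma sumD i : \sum_(1 <= k < 10) Delta k = 1 ->
  Delta 8 * (p i ^+ 2 * (1 - p i)) = 0.
Proof.
rewrite /index_iota /= !big_cons big_nil => H.
have := sum_fr i; rewrite sum_gen /fr /= => H2.
lra.
Qed.
Definition mu (g : genotype -> R) i := \sum_x fr i x * g x.

Lemma prod_if n (i : 'I_n) (a : 'I_n -> R) :
  \prod_(k < n) (if k == i then a k else 1) = a i.
Proof.
rewrite (bigD1 i) //= eqxx big1 ?mulr1 // => k /negbTE -> //.
Qed.

Lemma cross n (g : genotype -> R) (i j : 'I_n) :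
  \sum_(t : {ffun 'I_n -> genotype}) pi t * ((g (t i) - mu g i) * (g (t j) - mu g j))
  = if i == j then \sum_x fr i x * (g x - mu g i)^+2 else 0.
Proof.
pose F (k : 'I_n) x := fr k x * (if k == i then g x - mu g i else 1)
   * (if k == j then g x - mu g j else 1).
transitivity (\sum_(t : {ffun 'I_n -> genotype}) \prod_k F k (t k)).
  apply: eq_bigr => t _; rewrite /F !big_split /= /pi.
  rewrite (prod_if i (fun k => g (t k) - mu g i)).
  by rewrite (prod_if j (fun k => g (t k) - mu g j)) mulrA.
rewrite -bigA_distr_bigA /=.
have Hz : \sum_x fr i x * (g x - mu g i) = 0.
  under eq_bigr do rewrite mulrBr.
  by rewrite sumrB -mulr_suml sum_fr mul1r subrr.
have [ij|ij] := eqVneq i j.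
  subst j; rewrite (bigD1 i) //= [X in _ * X]big1 ?mulr1.
    by apply: eq_bigr => x _; rewrite /F eqxx -mulrA -expr2.
  move=> k /negbTE kn; rewrite /F kn.
  by under eq_bigr do rewrite !mulr1; rewrite sum_fr.
rewrite (bigD1 i) //= (_ : \sum_x F i x = 0) ?mul0r //.
rewrite -[RHS]Hz; apply: eq_bigr => x _; by rewrite /F eqxx (negbTE ij) mulr1.
Qed.

Lemma fr_le1 i x : fr i x <= 1.
Proof.
rewrite -(sum_fr i) (bigD1 x) //= lerDl sumr_ge0 // => y _; exact: fr_ge0.
Qed.

Lemma pi_ge0 n (t : {ffun 'I_n -> genotype}) : 0 <= pi t.
Proof. by apply: prodr_ge0 => k _; exact: fr_ge0. Qed.

Lemma var_i g i : \sum_x fr i x * (g x - mu g i)^+2 <= \sum_x g x ^+ 2.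
Proof.
have -> : \sum_x fr i x * (g x - mu g i)^+2 = \sum_x fr i x * g x ^+ 2 - mu g i ^+ 2.
  transitivity (\sum_x (fr i x * g x ^+ 2 - (mu g i *+ 2) * (fr i x * g x)
                  + mu g i ^+ 2 * fr i x)).
    by apply: eq_bigr => x _; ring.
  rewrite !big_split /= sumrN -!mulr_sumr sum_fr -/(mu g i); ring.
have h : \sum_x fr i x * g x ^+ 2 <= \sum_x g x ^+ 2.
  apply: ler_sum => x _; rewrite -[X in _ <= X]mul1r ler_wpM2r ?sqr_ge0 //.
  exact: fr_le1.
have := sqr_ge0 (mu g i); lra.
Qed.

Lemma second n g : \sum_(t : {ffun 'I_n -> genotype})
    pi t * (\sum_(i < n) (g (t i) - mu g i))^+2 <= n%:R * \sum_x g x ^+ 2.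
Proof.
have -> : \sum_(t : {ffun 'I_n -> genotype})
    pi t * (\sum_(i < n) (g (t i) - mu g i))^+2 =
  \sum_(i < n) \sum_(j < n) \sum_(t : {ffun 'I_n -> genotype})
    pi t * ((g (t i) - mu g i) * (g (t j) - mu g j)).
  symmetry; under eq_bigr do rewrite exchange_big /=.
  rewrite exchange_big /=; apply: eq_bigr => t _.
  rewrite expr2 mulr_suml mulr_sumr; apply: eq_bigr => i _.
  rewrite mulr_sumr mulr_sumr; apply: eq_bigr => j _; done.
under eq_bigr => i _ do under eq_bigr => j _ do rewrite cross.
rewrite mulr_natl -[in X in _ <= X](card_ord n) -sumr_const.
apply: ler_sum => i _.
rewrite (bigD1 i) //= eqxx [X in _ + X]big1 ?addr0; first exact: var_i.
by move=> j /negbTE; rewrite eq_sym => ->.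
Qed.

Definition Yg (g : genotype -> R) n (t : {ffun 'I_n -> genotype}) :=
  n%:R^-1 * \sum_(i < n) g (t i).
Definition mg (g : genotype -> R) n := n%:R^-1 * \sum_(i < n) mu g i.

Lemma cheb n g (eps : R) : 0 < eps -> (0 < n)%N ->
  \sum_(t : {ffun 'I_n -> genotype} | eps <= `|Yg g t - mg g n|) pi t <= (\sum_x g x ^+ 2) / (n%:R * eps ^+ 2).
Proof.
move=> ep n0.
have nR : 0 < n%:R :> R by rewrite ltr0n.
pose S (t : {ffun 'I_n -> genotype}) := \sum_(i < n) (g (t i) - mu g i).
have YD t : Yg g t - mg g n = n%:R^-1 * S t.
  by rewrite /Yg /mg -mulrBr /S sumrB.
apply: (@le_trans _ _ (\sum_(t : {ffun 'I_n -> genotype} | eps <= `|Yg g t - mg g n|) pi t * ((n%:R^-1 * S t)^+2 / eps^+2))).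
  apply: ler_sum => t; rewrite YD => H.
  have h1 : eps ^+ 2 <= (n%:R^-1 * S t) ^+ 2.
    rewrite -[X in _ <= X]real_normK ?num_real //.
    by apply: (lerXn2r 2); rewrite ?nnegrE ?normr_ge0 ?(ltW ep).
  rewrite -[X in X <= _]mulr1 ler_wpM2l ?pi_ge0 //.
  by rewrite ler_pdivlMr ?exprn_gt0 // mul1r.
apply: (@le_trans _ _ (\sum_(t : {ffun 'I_n -> genotype}) pi t * ((n%:R^-1 * S t)^+2 / eps^+2))).
  rewrite [X in _ <= X](bigID (fun t => eps <= `|Yg g t - mg g n|)) /= lerDl.
  apply: sumr_ge0 => t _; apply: mulr_ge0; first exact: pi_ge0.
  by apply: divr_ge0; apply: sqr_ge0.
have -> : \sum_(t : {ffun 'I_n -> genotype}) pi t * ((n%:R^-1 * S t)^+2 / eps^+2) =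
    (\sum_(t : {ffun 'I_n -> genotype}) pi t * S t ^+ 2) * (n%:R ^- 2 / eps ^+ 2).
  rewrite mulr_suml; apply: eq_bigr => t _; rewrite exprMn exprVn; ring.
apply: (@le_trans _ _ ((n%:R * \sum_x g x ^+ 2) * (n%:R ^- 2 / eps ^+ 2))).
  rewrite ler_wpM2r ?second //; apply: divr_ge0; rewrite ?invr_ge0 exprn_ge0 // ltW //.
rewrite le_eqVlt; apply/orP; left; apply/eqP; field.
by rewrite !gt_eqF.
Qed.

Lemma sum_sub n (Q Q' : pred {ffun 'I_n -> genotype}) :
  (forall t, Q t -> Q' t) -> \sum_(t | Q t) pi t <= \sum_(t | Q' t) pi t.
Proof.
move=> H; rewrite [X in X <= _]big_mkcond [X in _ <= X]big_mkcond /=.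
apply: ler_sum => t _; case: (boolP (Q t)) => Qt; first by rewrite H.
by case: (Q' t); rewrite ?pi_ge0.
Qed.

Lemma inv_bound n : (0 < n)%N -> n%:R^-1 <= 2 * harmonic n :> R.
Proof.
move=> n0; rewrite /harmonic /= -[X in _ <= X]invf_div.
have n1 : 1 <= n%:R :> R by rewrite ler1n.
rewrite lef_pV2 ?posrE ?divr_gt0 ?ltr0n //.
rewrite -natr1; lra.
Qed.

Lemma conv_gen g a b th (nb : nat -> R) nu (est : nat -> T -> R) :
  b = 1 \/ b = -1 -> nu != 0 -> nb n @[n --> \oo] --> nu ->
  (forall n, mg g n = b * (th - a) * nb n) ->
  (forall n w, est n w = a + b * Yg g (tup n w) / nb n) ->
  cvg_in_prob P est th.
Proof.
move=> hb nu0 cnb hm hest eps ep.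
have nup : 0 < `|nu| by rewrite normr_gt0.
pose e' := eps * `|nu| / 2.
have e'0 : 0 < e' by rewrite /e' divr_gt0 ?mulr_gt0.
pose K := \sum_x g x ^+ 2.
have K0 : 0 <= K by apply: sumr_ge0 => x _; exact: sqr_ge0.
apply: (@squeeze_cvge _ _ _ _ (fun=> 0%E) _ (fun n => ((2 * K / e'^+2) * harmonic n)%:E)); last first.
- exact: (cvgr_harmonic_helper).
- exact: cvg_cst.
have hn := cvgr_dist_lt _ _ cnb (`|nu| / 2) (divr_gt0 nup (ltr0Sn _ 1)).
near=> n.
have hnb : `|nu - nb n| < `|nu| / 2.
  near: n. exact: hn.
have n0 : (0 < n)%N by near: n; exists 1%N.
apply/andP; split; first exact: measure_ge0.
have nb2 : `|nu| / 2 < `|nb n|.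
  have := ler_normD (nu - nb n) (nb n); rewrite subrK; lra.
have nbn0 : nb n != 0 by rewrite -normr_gt0; apply: lt_trans nb2; lra.
rewrite (_ : P _ = (\sum_(t : {ffun 'I_n -> genotype} | eps <= `|a + b * Yg g t / nb n - th|) pi t)%:E); last first.
  rewrite -P_pred; congr (P _).
  by apply/seteqP; split => w /=; rewrite hest.
rewrite lee_fin.
apply: le_trans (sum_sub (Q' := fun t => e' <= `|Yg g t - mg g n|) _) _.
  move=> t /= H.
  have -> : Yg g t - mg g n = b * (nb n * (a + b * Yg g t / nb n - th)).
    by rewrite hm; case: hb => ->; field.
  rewrite normrM (_ : `|b| = 1); last by case: hb => ->; rewrite ?normrN normr1.
  rewrite mul1r normrM /e'.
  have := normr_ge0 nu; nra.
apply: le_trans (cheb g e'0 n0) _.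
rewrite -/K (_ : K / (n%:R * e' ^+ 2) = K / e' ^+ 2 * n%:R^-1); last first.
  field; by rewrite !gt_eqF ?ltr0n.
rewrite (_ : 2 * K / e' ^+ 2 * harmonic n = K / e' ^+ 2 * (2 * harmonic n)); last by ring.
rewrite ler_wpM2l ?inv_bound //; apply: divr_ge0 => //; exact: sqr_ge0.
Unshelve. all: by end_near.
Qed.

Definition I (x y : genotype) : R := if y == x then 1 else 0.

Lemma indE i x w : (\1_(X i @^-1` [set x]) w : R) = I x (X i w).
Proof.
rewrite indicE /I; case: eqP => h.
  by rewrite mem_set.
by rewrite memNset.
Qed.

Lemma Yg_sum g n w : Yg g (tup n w) = \sum_x g x * fhat R X n x w.
Proof.
rewrite /Yg /fhat.
under [RHS]eq_bigr => x _ do rewrite mulrCA mulr_sumr.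
rewrite -mulr_sumr; congr (_ * _); rewrite exchange_big /=.
apply: eq_bigr => i _; rewrite ffunE.
rewrite (bigD1 (X i w)) //= big1 ?addr0.
  by rewrite indE /I eqxx mulr1.
by move=> x /negbTE hx; rewrite indE /I eq_sym hx mulr0.
Qed.

Definition g1 y := 2^-1 * ((2^-1 * (I G1101 y + I G0100 y) + 4^-1 * I G0101 y + I G1100 y)
  + (2^-1 * (I G0111 y + I G0001 y) + 4^-1 * I G0101 y + I G0011 y)).

Lemma tau1E n w : tau1 R X n w = Yg g1 (tup n w).
Proof.
rewrite Yg_sum sum_gen /g1 /I /= /tau1 /tau1A /tau1B.
ring.
Qed.

Definition g2A y := 2^-1 * (I G0111 y + I G0101 y + I G0100 y).
Definition g2B y := 2^-1 * (I G1101 y + I G0101 y + I G0001 y).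
Definition g3 y := 4^-1 * ((I G0100 y - I G0111 y) + (I G0001 y - I G1101 y)).
Definition g4 y := 2^-1 * (I G1100 y - I G0011 y).

Lemma tau2AE n w : tau2A R X n w = Yg g2A (tup n w).
Proof. rewrite Yg_sum sum_gen /g2A /I /= /tau2A; ring. Qed.
Lemma tau2BE n w : tau2B R X n w = Yg g2B (tup n w).
Proof. rewrite Yg_sum sum_gen /g2B /I /= /tau2B; ring. Qed.
Lemma tau3E n w : tau3 R X n w = Yg g3 (tup n w).
Proof. rewrite Yg_sum sum_gen /g3 /I /= /tau3; ring. Qed.
Lemma tau4E n w : tau4 R X n w = Yg g4 (tup n w).
Proof. rewrite Yg_sum sum_gen /g4 /I /= /tau4; ring. Qed.

Lemma mg_lin g c (w : nat -> R) n : (forall i, mu g i = c * w i) ->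
  mg g n = c * (n%:R^-1 * \sum_(i < n) w i).
Proof.
move=> H; rewrite /mg (eq_bigr (fun i : 'I_n => c * w i)); last by move=> i _; exact: H.
by rewrite -mulr_sumr mulrCA.
Qed.

Section Ident.
Hypothesis HD : \sum_(1 <= k < 10) Delta k = 1.
Let q i := 1 - p i.

Lemma D1E : Delta 1 = 1 - (Delta 2 + Delta 3 + Delta 4 + Delta 5 + Delta 6 + Delta 7
   + Delta 8 + Delta 9).
Proof. move: HD; rewrite /index_iota /= !big_cons big_nil; lra. Qed.

Lemma mu1 i : mu g1 i = -1 * (theta1 Delta - 1) * (p i * (1 - p i)).
Proof.
have h8 := sumD i HD.
rewrite -[RHS]addr0 -(mulr0 (- 4^-1)) -h8.
rewrite /mu sum_gen /g1 /I /fr /= /theta1 D1E; by field.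
Qed.
Lemma mu2A i : mu g2A i = -1 * (theta2A Delta - 1) * (p i * (1 - p i)).
Proof.
have h8 := sumD i HD.
rewrite -[RHS]addr0 -(mulr0 (- 2^-1)) -h8.
rewrite /mu sum_gen /g2A /I /fr /= /theta2A D1E; by field.
Qed.
Lemma mu2B i : mu g2B i = -1 * (theta2B Delta - 1) * (p i * (1 - p i)).
Proof.
have h8 := sumD i HD.
rewrite -[RHS]addr0 -(mulr0 (- 2^-1)) -h8.
rewrite /mu sum_gen /g2B /I /fr /= /theta2B D1E; by field.
Qed.
Lemma mu3 i : mu g3 i = -1 * (theta3 Delta - 1) * (p i * (1 - p i) * (1 - 2 * p i)).
Proof.
rewrite /mu sum_gen /g3 /I /fr /= /theta3 D1E; by field.
Qed.
Lemma mu4 i : mu g4 i = 1 * (theta4 Delta - 0) * (p i * (1 - p i) * (1 - 2 * p i)).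
Proof.
rewrite /mu sum_gen /g4 /I /fr /= /theta4; by field.
Qed.
End Ident.

End Prob.

Theorem theorem5 (d : measure_display) (T : measurableType d) (R : realType)
  (P : probability T R) (Delta : nat -> R) (p : nat -> R)
  (X : nat -> T -> genotype) (nu2 nu3 : R) :
  prob_vector9 Delta ->
  (forall i, 0 <= p i <= 1) ->
  discrete_RVs X ->
  mutually_independent P X ->
  (forall i x, P (X i @^-1` [set x]) = (freq Delta (p i) x)%:E) ->
  nu2 != 0 -> nu3 != 0 ->
  nubar2 p n @[n --> \oo] --> nu2 ->
  nubar3 p n @[n --> \oo] --> nu3 ->
  [/\ cvg_in_prob P (theta1hat p X) (theta1 Delta),
      cvg_in_prob P (theta2Ahat p X) (theta2A Delta),
      cvg_in_prob P (theta2Bhat p X) (theta2B Delta),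
      cvg_in_prob P (theta3hat p X) (theta3 Delta) &
      cvg_in_prob P (theta4hat p X) (theta4 Delta)].
Proof.
move=> [_ HD] _ HX Hind Hf nu20 nu30 c2 c3.
split.
- apply: (conv_gen HX Hind Hf (g := @g1 R) (a := 1) (b := -1) (nb := nubar2 p) (nu := nu2)) => //.
  + by right.
  + by move=> n; rewrite (mg_lin n (mu1 HX Hf HD)).
  + by move=> n w; rewrite /theta1hat tau1E; ring.
- apply: (conv_gen HX Hind Hf (g := @g2A R) (a := 1) (b := -1) (nb := nubar2 p) (nu := nu2)) => //.
  + by right.
  + by move=> n; rewrite (mg_lin n (mu2A HX Hf HD)).
  + by move=> n w; rewrite /theta2Ahat tau2AE; ring.
- apply: (conv_gen HX Hind Hf (g := @g2B R) (a := 1) (b := -1) (nb := nubar2 p) (nu := nu2)) => //.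
  + by right.
  + by move=> n; rewrite (mg_lin n (mu2B HX Hf HD)).
  + by move=> n w; rewrite /theta2Bhat tau2BE; ring.
- apply: (conv_gen HX Hind Hf (g := @g3 R) (a := 1) (b := -1) (nb := nubar3 p) (nu := nu3)) => //.
  + by right.
  + by move=> n; rewrite (mg_lin n (mu3 p HD)).
  + by move=> n w; rewrite /theta3hat tau3E; ring.
- apply: (conv_gen HX Hind Hf (g := @g4 R) (a := 0) (b := 1) (nb := nubar3 p) (nu := nu3)) => //.
  + by left.
  + by move=> n; rewrite (mg_lin n (mu4 Delta p)).
  + by move=> n w; rewrite /theta4hat tau4E; ring.
Qed.
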